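(* Let $G$ be a graph, $k$ a positive integer, and $V_1,\dots,V_t$ a partition of $V(G)$ into types as described in the context. If the integer program $\mathrm{ILP}(G,k,V_1,\dots,V_t)$ described in the context has a feasible assignment, then $G$ has a star coloring using at most $k$ colors.
   Context: All graphs are finite, simple, undirected and connected. A star coloring of $G$ with at most $k$ colors is a map $f:V(G)\to\{1,\dots,k\}$ with $f(u)\neq f(v)$ for every edge $uv$ such that every path on four vertices (not necessarily induced) receives at least three distinct colors. Two vertices $u,v$ have the same type if $N(u)\setminus\{v\}=N(v)\setminus\{u\}$; $V_1,\dots,V_t$ is a partition of $V(G)$ into nonempty sets in each of which all vertices pairwise have the same type. Then each $G[V_i]$ is a clique or an independent set; $V_i$ is called a clique type if $G[V_i]$ is complete and an independent type if $G[V_i]$ has no edges. For $i\neq j$, either every vertex of $V_i$ is adjacent to every vertex of $V_j$ (write $V_j\in adj(V_i)$) or there are no edges between them. For $A\subseteq[t]$ let $T_A=\{V_i: i\in A\}$. The program $\mathrm{ILP}(G,k,V_1,\dots,V_t)$ has one integer variable $n_A$ for every $A\subseteq[t]$ and the following constraints: (C0) $n_A=0$ (the variable is discarded) whenever $T_A$ contains two types $V_i,V_j$ with $V_j\in adj(V_i)$; (C1) $\sum_{A\subseteq[t]} n_A\le k$; (C2) for each clique type $V_i$: $\sum_{A: V_i\in T_A} n_A=|V_i|$; (C3) for each independent type $V_i$: $1\le \sum_{A:V_i\in T_A} n_A\le \min\{k,|V_i|\}$; (C4) for every four distinct types $V_{i_1},V_{i_2},V_{i_3},V_{i_4}$ with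 $V_{i_1},V_{i_3}\in adj(V_{i_2})$ and $V_{i_4}\in adj(V_{i_3})$: if $\sum_{A: V_{i_1},V_{i_3}\in T_A} n_A\ge 1$ then $\sum_{B: V_{i_2},V_{i_4}\in T_B} n_B=0$; (C5) for every three distinct types $V_{i_1},V_{i_2},V_{i_3}$ with $V_{i_1}$ an independent type and $V_{i_2},V_{i_3}\in adj(V_{i_1})$: if $\sum_{A:V_{i_1}\in T_A} n_A<|V_{i_1}|$ then $\sum_{B: V_{i_2},V_{i_3}\in T_B} n_B=0$; (C6) for every two distinct independent types $V_{i_1},V_{i_2}$ with $V_{i_1}\in adj(V_{i_2})$: if $\sum_{A:V_{i_1}\in T_A} n_A<|V_{i_1}|$ then $\sum_{B:V_{i_2}\in T_B} n_B=|V_{i_2}|$, and symmetrically with $i_1,i_2$ swapped; (C7) $n_A\ge 0$ for all $A\subseteq[t]$. A feasible assignment is an assignment of integer values to all $n_A$ satisfying (C0)–(C7). *)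

(* Defs.v *)
From mathcomp Require Import all_boot all_order all_algebra.
Set Implicit Arguments. Unset Strict Implicit. Unset Printing Implicit Defensive.
Import GRing.Theory Num.Theory.

Section Defs.
Variable T : finType.

Definition simple_graph (e : rel T) : Prop :=
  symmetric e /\ irreflexive e.

Definition connected_graph (e : rel T) : Prop :=
  forall u v : T, connect e u v.

Definition star_coloring (e : rel T) (k : nat) (f : T -> 'I_k) : Prop :=
  (forall u v, e u v -> f u != f v) /\
  (forall a b c d : T, uniq [:: a; b; c; d] -> e a b -> e b c -> e c d ->
     3 <= #|[set f a; f b; f c; f d]|).

Definition same_type (e : rel T) (u v : T) : Prop :=
  [set w | e u w] :\ v = [set w | e v w] :\ u.

Variable (e : rel T) (t : nat) (p : T -> 'I_t).

Definition part (i : 'I_t) : {set T} := [set x | p x == i].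

Definition type_partition : Prop :=
  (forall i : 'I_t, exists x, p x = i) /\
  (forall u v, p u = p v -> same_type e u v).

Definition tadj (i j : 'I_t) : bool :=
  (i != j) && [exists u, exists v, [&& p u == i, p v == j & e u v]].

Definition clique_type (i : 'I_t) : Prop :=
  forall u v, p u = i -> p v = i -> u != v -> e u v.

Definition indep_type (i : 'I_t) : Prop :=
  forall u v, p u = i -> p v = i -> ~~ e u v.

Local Open Scope ring_scope.

Definition sumA (n : {set 'I_t} -> int) (S : {set 'I_t}) : int :=
  \sum_(A : {set 'I_t} | S \subset A) n A.

Definition ILP_feasible (k : nat) (n : {set 'I_t} -> int) : Prop :=
  (forall A : {set 'I_t}, forall i j, i \in A -> j \in A -> tadj i j -> n A = 0) /\
  (\sum_(A : {set 'I_t}) n A <= k%:Z) /\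
  (forall i, clique_type i -> sumA n [set i] = #|part i|%:Z) /\
  (forall i, indep_type i ->
     1 <= sumA n [set i] /\ sumA n [set i] <= (minn k #|part i|)%:Z) /\
  (forall i1 i2 i3 i4 : 'I_t, uniq [:: i1; i2; i3; i4] ->
     tadj i2 i1 -> tadj i2 i3 -> tadj i3 i4 ->
     1 <= sumA n [set i1; i3] -> sumA n [set i2; i4] = 0) /\
  (forall i1 i2 i3 : 'I_t, uniq [:: i1; i2; i3] -> indep_type i1 ->
     tadj i1 i2 -> tadj i1 i3 ->
     sumA n [set i1] < #|part i1|%:Z -> sumA n [set i2; i3] = 0) /\
  (* C6 (both orientations, since i1 i2 range over all ordered pairs) *)
  (forall i1 i2 : 'I_t, i1 != i2 -> indep_type i1 -> indep_type i2 ->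
     tadj i2 i1 ->
     sumA n [set i1] < #|part i1|%:Z -> sumA n [set i2] = #|part i2|%:Z) /\
  (forall A, 0 <= n A).

End Defs.

(* Main.v *)
Require Import Defs.
From mathcomp Require Import all_boot all_order all_algebra.
Import GRing.Theory Num.Theory.
Set Implicit Arguments. Unset Strict Implicit.
Lemma count_pairs (t K : nat) (m : {set 'I_t} -> nat) (P : pred {set 'I_t}) :
  (forall A, m A <= K) ->
  #|[set x : {set 'I_t} * 'I_K | P x.1 && (x.2 < m x.1)]| = \sum_(A | P A) m A.
Proof.
move=> mK.
rewrite -sum1_card.
rewrite (eq_bigl (fun x : {set 'I_t} * 'I_K => P x.1 && (x.2 < m x.1))); last first.
  by move=> x; rewrite inE.
rewrite -(pair_big_dep P (fun A (j : 'I_K) => j < m A) (fun _ _ => 1)) /=.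
apply: eq_bigr => A _.
rewrite (big_ord_narrow_cond (P := xpredT) (mK A)) /= sum1_card card_ord //.
Qed.

Lemma three_le (X : finType) (S : {set X}) x y z :
  x \in S -> y \in S -> z \in S -> x != y -> y != z -> x != z -> 3 <= #|S|.
Proof.
move=> xS yS zS xy yz xz.
have -> : 3 = #|[set x; y; z]|.
  by rewrite setUC cardsU1 cards2 !inE negb_or xy eq_sym xz eq_sym yz.
apply: subset_leq_card; apply/subsetP => w; rewrite !inE -orbA => /or3P[]/eqP->//.
Qed.

Lemma star4 (X : finType) (a b c d : X) :
  a != b -> b != c -> c != d -> ~ (a = c /\ b = d) -> 3 <= #|[set a; b; c; d]|.
Proof.
move=> ab bc cd H.
case: (eqVneq a c) => ac.
  have bd : b != d by apply/eqP => bd; apply: H.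
  apply: (@three_le _ _ b c d); rewrite ?inE ?eqxx ?orbT //.
apply: (@three_le _ _ a b c); rewrite ?inE ?eqxx ?orbT //.
Qed.

Lemma part_cases (T : finType) (e : rel T) (t : nat) (p : T -> 'I_t) :
  simple_graph e -> (forall u v, p u = p v -> same_type e u v) ->
  forall i, clique_type e p i \/ indep_type e p i.
Proof.
move=> [esy eirr] st i.
have S : forall a b c, e a b -> p a = p c -> c != b -> e c b.
  move=> a b c eab pac cb.
  have := st a c pac; rewrite /same_type => /setP /(_ b).
  by rewrite !inE eq_sym (negbTE cb) eab /= => /esym /andP[].
case: (boolP [exists u, exists v, [&& p u == i, p v == i & e u v]]).
  move=> /existsP[u0 /existsP[v0 /and3P[/eqP pu /eqP pv euv]]].
  left => x y px py xy.
  case: (eqVneq x v0) => [xv|xv].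
    subst x.
    have := S u0 v0 y euv (etrans pu (esym py)).
    rewrite eq_sym xy => /(_ isT) h; by rewrite esy.
  have exv : e x v0 := S u0 v0 x euv (etrans pu (esym px)) xv.
  case: (eqVneq y v0) => [->//|yv].
  have := S v0 x y _ (etrans pv (esym py)) _.
  rewrite esy exv eq_sym xy => /(_ isT isT) h; by rewrite esy.
move=> /existsPn H; right => u v pu pv; apply/negP => euv.
by move: (H u) => /existsPn /(_ v); rewrite pu pv euv !eqxx.
Qed.

Definition hmap (T X : finType) (V : {set T}) (C : {set X}) (d : X) (v : T) :=
  nth d (enum C) (index v (enum V)).

Lemma hmap_in (T X : finType) (V : {set T}) (C : {set X}) d v :
  d \in C -> hmap V C d v \in C.
Proof.
move=> dC; rewrite /hmap.
case: (ltnP (index v (enum V)) (size (enum C))) => h.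
  by rewrite -mem_enum mem_nth.
by rewrite nth_default.
Qed.

Lemma hmap_inj (T X : finType) (V : {set T}) (C : {set X}) d :
  #|V| <= #|C| -> {in V &, injective (hmap V C d)}.
Proof.
move=> VC u v uV vV; rewrite /hmap => /eqP.
have iu : index u (enum V) < size (enum C).
  by rewrite -cardE; apply: leq_trans VC; rewrite cardE index_mem mem_enum.
have iv : index v (enum V) < size (enum C).
  by rewrite -cardE; apply: leq_trans VC; rewrite cardE index_mem mem_enum.
rewrite nth_uniq ?enum_uniq // => /eqP.
by apply: index_inj; rewrite ?mem_enum.
Qed.

Unset Implicit Arguments.
Local Open Scope ring_scope.

Theorem lemma1 (T : finType) (e : rel T) (k t : nat) (p : T -> 'I_t) :
  simple_graph e -> connected_graph e -> (0 < k)%N ->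
  type_partition e p ->
  (exists n : {set 'I_t} -> int, ILP_feasible e p k n) ->
  exists f : T -> 'I_k, star_coloring e f.
Proof.
move=> sg _ kpos [pne pst] [n [C0 [C1 [C2 [C3 [C4 [C5 [C6 C7]]]]]]]].
have pc := part_cases sg pst.
case: sg => esy eirr.
pose m A := `|n A|%N.
have nm : forall A, n A = (m A)%:Z by move=> A; rewrite /m gez0_abs.
have summ : (\sum_A m A <= k)%N.
  by rewrite -lez_nat -natz natr_sum; under eq_bigr => A _ do rewrite natz -nm.
have mK : forall A, (m A <= k)%N.
  by move=> A; apply: leq_trans summ; rewrite (bigD1 A) //= leq_addr.
pose X := ({set 'I_t} * 'I_k)%type.
pose Cs (S : {set 'I_t}) := [set x : X | (S \subset x.1) && (x.2 < m x.1)%N].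
have sumAE : forall S, sumA n S = (#|Cs S|)%:Z.
  move=> S; rewrite /Cs (@count_pairs t k m (fun A => S \subset A)) // /sumA -natz natr_sum.
  by apply: eq_bigr => A _; rewrite natz -nm.
have ncol : forall i, (0 < #|Cs [set i]|)%N.
  move=> i; have [x px] := pne i.
  have xin : x \in part p i by rewrite inE px.
  case: (pc i) => [/C2|/C3 [h _]].
    by rewrite sumAE => [[->]]; apply/card_gt0P; exists x.
  by rewrite sumAE lez_nat in h.
pose d0 : X := (set0, Ordinal kpos).
pose dd i := odflt d0 [pick x in Cs [set i]].
have ddin : forall i, dd i \in Cs [set i].
  move=> i; rewrite /dd; case: pickP => [x -> //|H].
  by have := ncol i; rewrite (eq_card0 H).
pose g v := hmap (part p (p v)) (Cs [set p v]) (dd (p v)) v.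
have gin : forall v, g v \in Cs [set p v] by move=> v; apply: hmap_in.
have ginj : forall u v, p u = p v -> (#|part p (p u)| <= #|Cs [set p u]|)%N -> g u = g v -> u = v.
  move=> u v puv H; rewrite /g -puv; apply: hmap_inj => //; by rewrite inE ?puv.
have gsame : forall u v, g u = g v -> tadj e p (p u) (p v) -> False.
  move=> u v guv tuv.
  have := gin u; have := gin v; rewrite -guv !inE !sub1set => /andP[pv _] /andP[pu mpos].
  have := C0 (g u).1 _ _ pu pv tuv; rewrite nm => -[] h.
  by rewrite h ltn0 in mpos.
have gpair : forall u v, g u = g v -> 1 <= sumA n [set p u; p v].
  move=> u v guv; rewrite sumAE lez_nat; apply/card_gt0P; exists (g u).
  have := gin u; have := gin v; rewrite -guv !inE !sub1set => /andP[pv _] /andP[pu mpos].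
  by rewrite subUset !sub1set pu pv mpos.
have gI : forall u v, g u = g v -> u != v -> p u = p v ->
    indep_type e p (p u) /\ sumA n [set p u] < (#|part p (p u)|)%:Z.
  move=> u v guv uv puv.
  have lt : (#|Cs [set p u]| < #|part p (p u)|)%N.
    rewrite ltnNge; apply/negP => H; move/eqP: uv; apply; exact: ginj H guv.
  split; last by rewrite sumAE ltz_nat.
  case: (pc (p u)) => // /C2; rewrite sumAE => -[] h.
  by rewrite h ltnn in lt.
have tadjE : forall u v, e u v -> p u != p v -> tadj e p (p u) (p v).
  move=> u v euv puv; rewrite /tadj puv /=.
  by apply/existsP; exists u; apply/existsP; exists v; rewrite !eqxx euv.
have indep_ne : forall u v, indep_type e p (p u) -> e u v -> p u != p v.
  move=> u v ind euv; apply/eqP => puv.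
  by have := ind u v erefl (esym puv); rewrite euv.
have proper : forall u v, e u v -> g u != g v.
  move=> u v euv; apply/eqP => guv.
  case: (eqVneq (p u) (p v)) => puv.
    have uv : u != v by apply/eqP => uv; rewrite uv eirr in euv.
    have [ind _] := gI u v guv uv puv.
    by move: (indep_ne u v ind euv); rewrite puv eqxx.
  exact: gsame guv (tadjE u v euv puv).
have star : forall a b c d, uniq [:: a; b; c; d] -> e a b -> e b c -> e c d ->
    g a = g c -> g b = g d -> False.
  move=> a b c d U eab ebc ecd gac gbd.
  move: U; rewrite /= !inE !negb_or => /and4P[/and3P[ab ac ad] /andP[bc bd] cd _].
  case: (eqVneq (p a) (p c)) => pac; case: (eqVneq (p b) (p d)) => pbd.
  - have [ia lta] := gI a c gac ac pac.
    have [ib ltb] := gI b d gbd bd pbd.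
    have pab := indep_ne a b ia eab.
    have h := C6 (p a) (p b) pab ia ib (tadjE b a ltac:(by rewrite esy) ltac:(by rewrite eq_sym)) lta.
    by rewrite h Order.POrderTheory.ltxx in ltb.
  - have [ia lta] := gI a c gac ac pac.
    have pab := indep_ne a b ia eab.
    have pad : p a != p d by have := indep_ne c d ltac:(by rewrite -pac) ecd; rewrite -pac.
    have tad : tadj e p (p a) (p d) by have := tadjE c d ecd ltac:(by rewrite -pac); rewrite -pac.
    have U : uniq [:: p a; p b; p d] by rewrite /= !inE !negb_or pab pad pbd.
    have h := C5 (p a) (p b) (p d) U ia (tadjE a b eab pab) tad lta.
    by have := gpair b d gbd; rewrite h.
  - have [ib ltb] := gI b d gbd bd pbd.
    have pba := indep_ne b a ib ltac:(by rewrite esy).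
    have pbc := indep_ne b c ib ebc.
    have U : uniq [:: p b; p a; p c] by rewrite /= !inE !negb_or pba pbc pac.
    have h := C5 (p b) (p a) (p c) U ib (tadjE b a ltac:(by rewrite esy) pba) (tadjE b c ebc pbc) ltb.
    by have := gpair a c gac; rewrite h.
  have pab : p a != p b.
    apply/eqP => h; apply: (gsame a c gac); rewrite h; apply: tadjE ebc _; by rewrite -h.
  have pbc : p b != p c.
    apply/eqP => h; apply: (gsame a c gac); rewrite -h; apply: tadjE eab _; by rewrite h.
  have pcd : p c != p d.
    apply/eqP => h; apply: (gsame b d gbd); rewrite -h; apply: tadjE ebc _; by rewrite h.
  have pad : p a != p d.
    apply/eqP => h; apply: (gsame b d gbd); rewrite -h; apply: tadjE; [by rewrite esy | by rewrite eq_sym].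
  have U : uniq [:: p a; p b; p c; p d] by rewrite /= !inE !negb_or pab pac pad pbc pbd pcd.
  have h := C4 (p a) (p b) (p c) (p d) U (tadjE b a ltac:(by rewrite esy) ltac:(by rewrite eq_sym))
    (tadjE b c ebc pbc) (tadjE c d ecd pcd) (gpair a c gac).
  by have := gpair b d gbd; rewrite h.
have gall : forall v, g v \in Cs set0.
  by move=> v; have := gin v; rewrite !inE sub0set => /andP[_ ->].
have Cs0k : (#|Cs set0| <= k)%N.
  rewrite -lez_nat -sumAE /sumA; apply: Order.POrderTheory.le_trans C1.
  by rewrite (eq_bigl xpredT) // => A; rewrite sub0set.
pose f v : 'I_k := insubd (Ordinal kpos) (index (g v) (enum (Cs set0))).
have fv : forall v, val (f v) = index (g v) (enum (Cs set0)).
  move=> v; rewrite val_insubd; case: ifP => // /negP []; apply: leq_trans Cs0k.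
  by rewrite cardE index_mem mem_enum.
have fE : forall u v, (f u == f v) = (g u == g v).
  move=> u v; rewrite -val_eqE /= !fv; apply/eqP/eqP => [|->//].
  by apply: index_inj; rewrite ?mem_enum ?gall.
exists f; split.
  by move=> u v euv; rewrite fE proper.
move=> a b c d U eab ebc ecd.
apply: star4; rewrite ?fE ?proper //.
move=> [/eqP gac /eqP gbd]; rewrite fE in gac; rewrite fE in gbd.
exact: star U eab ebc ecd (eqP gac) (eqP gbd).
Qed.
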